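(* Let $n\ge2$ and $n_a,n_b\ge1$ be integers with $n_a\ge n_b$ and $n_a+n_b=n$. (1) If $n_a=n_b=n/2$, then $(n_a,n_b)\in QB(n)$. (2) If $n_a>n_b$, then $(n_a,n_b)\in QB(n)$ if and only if one of the following holds: (i) there exist $k\in\mathbb{N}$ and $p\in\mathbb{N}_{\ge1}$ with $n=2^k(2p+1)$, $n_a=2^k(p+1)$, $n_b=2^kp$; (ii) there exist $k\in\mathbb{N}$, $l\in\mathbb{N}_{\ge2}$, $p\in\mathbb{N}_{\ge1}$ and $t\in\mathbb{N}$ with $0\le t<2^{l-2}$ such that $n=2^k(2^l(2p+1)+2t+1)$, $n_a=2^{k+l}(p+1)$, $n_b=2^k(2^lp+2t+1)$; (iii) there exist $k\in\mathbb{N}$, $l\in\mathbb{N}_{\ge2}$, $p\in\mathbb{N}_{\ge1}$ and $t\in\mathbb{N}$ with $0\le t<2^{l-2}$ such that $n=2^k(2^l(2p+1)-(2t+1))$, $n_a=2^k(2^l(p+1)-(2t+1))$, $n_b=2^{k+l}p$.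
   Context: $\mathbb{N}$ includes $0$; $\mathbb{N}_{\ge m}=\{n\in\mathbb{N}:n\ge m\}$. Bifurcating trees: rooted trees in which every internal node has exactly two children; $\mathcal{T}_n$ is the set of isomorphism classes of bifurcating trees with $n$ leaves. The Colless index is $\mathcal{C}(T)=\sum_{v}|\kappa_T(v_1)-\kappa_T(v_2)|$, summed over internal nodes $v$ with children $v_1,v_2$, where $\kappa_T(w)$ is the number of leaves descending from $w$; $c_n=\min\{\mathcal{C}(T):T\in\mathcal{T}_n\}$. For $n\ge2$, $QB(n)=\{(n_a,n_b)\in\mathbb{N}^2: n_a\ge n_b\ge1,\ n_a+n_b=n,\ c_{n_a}+c_{n_b}+n_a-n_b=c_n\}$. *)

(* Defs.v *)
From mathcomp Require Import all_boot.
Set Implicit Arguments. Unset Strict Implicit. Unset Printing Implicit Defensive.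

(* Rooted bifurcating trees (plane representatives; isomorphism classes do
   not matter since the Colless index and leaf count are invariant). *)
Inductive btree : Type := Leaf | Node of btree & btree.

Fixpoint leaves (T : btree) : nat :=
  match T with Leaf => 1 | Node l r => leaves l + leaves r end.

Definition absdiff (a b : nat) : nat := (a - b) + (b - a).

Fixpoint colless (T : btree) : nat :=
  match T with
  | Leaf => 0
  | Node l r => colless l + colless r + absdiff (leaves l) (leaves r)
  end.

(* trees_f f n: all trees with exactly n leaves, for n <= f (fuel) *)
Fixpoint trees_f (f n : nat) : seq btree :=
  match f with
  | 0 => [::]
  | f'.+1 =>
      if n == 1 then [:: Leaf]
      else flatten [seq [seq Node x y | x <- trees_f f' i, y <- trees_f f' (n - i)]
                   | i <- iota 1 n.-1]
  end.

Definition trees_n (n : nat) : seq btree := trees_f n n.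

(* c_n = min Colless index over T_n (for n >= 1, T_n is nonempty; value 0 for n = 0 is irrelevant) *)
Definition min_colless (n : nat) : nat :=
  match [seq colless T | T <- trees_n n] with
  | [::] => 0
  | x :: s => foldr minn x s
  end.

Definition QB (n : nat) (na nb : nat) : Prop :=
  [/\ na >= nb, nb >= 1, na + nb = n &
      min_colless na + min_colless nb + (na - nb) = min_colless n].

(* Main.v *)
Require Import Defs.
From HB Require Import structures.
From mathcomp Require Import all_boot zify.
Set Implicit Arguments. Unset Strict Implicit. Unset Printing Implicit Defensive.


Fixpoint bt_eqb (x y : btree) : bool :=
  match x, y with
  | Leaf, Leaf => true
  | Node a b, Node c d => bt_eqb a c && bt_eqb b d
  | _, _ => false
  end.

Lemma bt_eqP : Equality.axiom bt_eqb.
Proof.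
elim=> [|a IHa b IHb] [|c d] /=; try by constructor.
by apply: (iffP andP) => [[/IHa -> /IHb ->]|[<- <-]]; split; [apply/IHa|apply/IHb].
Qed.
HB.instance Definition _ := hasDecEq.Build btree bt_eqP.

Fixpoint balf (fu n : nat) : btree :=
  match fu with
  | 0 => Leaf
  | fu'.+1 => if n <= 1 then Leaf else Node (balf fu' (n - n./2)) (balf fu' n./2)
  end.
Definition bal n := balf n n.
Definition f n := colless (bal n).

Lemma balf_fuel fu1 fu2 m : m <= fu1 -> m <= fu2 -> balf fu1 m = balf fu2 m.
Proof.
elim: fu1 fu2 m => [|fu1 IH] [|fu2] m /= h1 h2 //.
- by rewrite ifT //; lia.
- by rewrite ifT //; lia.
case: ifP => // hm.
by rewrite (IH fu2) ?(IH fu2 (m./2)) //; lia.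
Qed.

Lemma bal_eq n : 2 <= n -> bal n = Node (bal (n - n./2)) (bal n./2).
Proof.
move=> hn; rewrite /bal; case E: n hn => [|n'] // hn /=.
rewrite ifF; last lia.
rewrite -E; congr Node; apply: balf_fuel; lia.
Qed.

Lemma leaves_ge1 T : 1 <= leaves T.
Proof. elim: T => //= l IHl r IHr; lia. Qed.

Lemma leaves_bal n : 1 <= n -> leaves (bal n) = n.
Proof.
elim/ltn_ind: n => n IH hn.
case: (leqP n 1) => h.
  by have -> : n = 1 by lia.
rewrite bal_eq //= !IH; lia.
Qed.

Lemma f1 : f 1 = 0. Proof. by []. Qed.

Lemma f_even m : 1 <= m -> f (2 * m) = 2 * f m.
Proof.
move=> hm; rewrite /f bal_eq; last lia.
have -> : (2 * m)./2 = m by lia.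
have -> : 2 * m - m = m by lia.
rewrite /= /absdiff subnn; lia.
Qed.

Lemma f_odd m : 1 <= m -> f (2 * m + 1) = f (m + 1) + f m + 1.
Proof.
move=> hm; rewrite /f bal_eq; last lia.
have -> : (2 * m + 1)./2 = m by lia.
have -> : 2 * m + 1 - m = m + 1 by lia.
rewrite /= /absdiff !leaves_bal; lia.
Qed.

Lemma trees_leaves fu n : all (fun T => leaves T == n) (trees_f fu n).
Proof.
elim: fu n => [|fu IH] n //=.
case: ifP => [/eqP ->|_] //.
apply/allP => T /flattenP [s /mapP [i hi ->]] /allpairsPdep [x [y [hx hy ->]]] /=.
move/allP: (IH i) => /(_ x hx) /eqP ->.
move/allP: (IH (n - i)) => /(_ y hy) /eqP ->.
move: hi; rewrite mem_iota => hi; apply/eqP; lia.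
Qed.

Lemma trees_complete fu T : leaves T <= fu -> T \in trees_f fu (leaves T).
Proof.
elim: fu T => [|fu IH] T hT /=; first by have := leaves_ge1 T; lia.
case: T hT => [|l r] hT /=; first by rewrite mem_seq1.
have hl := leaves_ge1 l; have hr := leaves_ge1 r.
rewrite ifF; last lia.
apply/flattenP; exists [seq Node x y | x <- trees_f fu (leaves l), y <- trees_f fu (leaves l + leaves r - leaves l)].
  apply/mapP; exists (leaves l) => //; rewrite mem_iota; lia.
apply: allpairs_f; first by apply: IH; simpl in hT; lia.
have -> : leaves l + leaves r - leaves l = leaves r by lia.
apply: IH; simpl in hT; lia.
Qed.


Definition np2 d := 2 ^ (trunc_log 2 d).+1.

Lemma np2_spec d : 1 <= d -> d < np2 d <= 2 * d.
Proof.
move=> hd; rewrite /np2 trunc_log_ltn //= expnS.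
have := trunc_logP (isT : 1 < 2) hd; lia.
Qed.

Lemma pow_uniq i j d : d < 2 ^ i <= 2 * d -> d < 2 ^ j <= 2 * d -> i = j.
Proof.
move=> /andP [h1 h2] /andP [h3 h4].
case: (ltngtP i j) => // h.
- have : 2 ^ i.+1 <= 2 ^ j by rewrite leq_exp2l.
  rewrite expnS; lia.
- have : 2 ^ j.+1 <= 2 ^ i by rewrite leq_exp2l.
  rewrite expnS; lia.
Qed.

Lemma np2_uniq d l : d < 2 ^ l <= 2 * d -> np2 d = 2 ^ l.
Proof.
move=> h.
have hd : 1 <= d by move/andP: h => [h1 h2]; have := expn_gt0 2 l; lia.
by rewrite /np2 (@pow_uniq (trunc_log 2 d).+1 l d) //; apply: np2_spec.
Qed.

Lemma np2_ge2 d : 1 <= d -> 2 <= np2 d.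
Proof. move=> hd; have := np2_spec hd; lia. Qed.

Lemma np2_even d : 2 %| np2 d.
Proof. by rewrite /np2 expnS dvdn_mulr. Qed.

Lemma np2_dbl e : 1 <= e -> np2 (2 * e) = 2 * np2 e.
Proof.
move=> he; have := np2_spec he; rewrite {1 2 4}/np2 => h.
rewrite (@np2_uniq _ (trunc_log 2 e).+2) expnS //; lia.
Qed.

Lemma np2_odd e : 1 <= e -> np2 (2 * e + 1) = 2 * np2 e.
Proof.
move=> he; have := np2_spec he; rewrite {1 2 4}/np2 => h.
rewrite (@np2_uniq _ (trunc_log 2 e).+2) expnS //; lia.
Qed.

Lemma np2_1 : np2 1 = 2.
Proof. by rewrite (@np2_uniq 1 1). Qed.

Lemma np2_succ e : 1 <= e ->
  np2 (e + 1) = np2 e \/ (np2 (e + 1) = 2 * (e + 1) /\ np2 e = e + 1).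
Proof.
move=> he; have h := np2_spec (isT : 0 < e.+1); rewrite addn1.
have EN : np2 e.+1 = 2 * 2 ^ trunc_log 2 e.+1 by rewrite /np2 expnS.
rewrite EN in h *.
case: (leqP (2 * 2 ^ trunc_log 2 e.+1) (2 * e)) => h2.
  left; have -> : np2 e = 2 ^ (trunc_log 2 e.+1).+1 by apply: np2_uniq; rewrite expnS; lia.
  by rewrite expnS.
right; split; first lia.
have h3 : 2 ^ trunc_log 2 e.+1 = e.+1 by lia.
by rewrite -h3; apply: np2_uniq; lia.
Qed.

Definition Q a b := np2 (a - b) <= 2 * b /\ (np2 (a - b) %| a \/ np2 (a - b) %| b).

Lemma no_even_odd m x : odd x -> ~ (2 * m %| x).
Proof.
move=> ox h; have : 2 %| x by apply: dvdn_trans h; apply: dvdn_mulr.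
by rewrite dvdn2 ox.
Qed.

Lemma consec c q : 0 < c -> (2 * c %| q * c) \/ (2 * c %| (q + 1) * c).
Proof.
move=> hc; rewrite !dvdn_pmul2r // !dvdn2 addn1 /=; case: (odd q); auto.
Qed.

Lemma not_both M b : 2 <= M -> M %| b -> M %| b + 1 -> False.
Proof. move=> hM hb; rewrite dvdn_addr // dvdn1 => /eqP; lia. Qed.

Lemma Q_succ b : 1 <= b -> Q (b + 1) b.
Proof.
move=> hb; rewrite /Q.
have -> : b + 1 - b = 1 by lia.
rewrite np2_1; split; first lia.
by rewrite !dvdn2 addn1 /=; case: (odd b); auto.
Qed.

Lemma Q_dbl x y : y < x -> (Q (2 * x) (2 * y) <-> Q x y).
Proof.
move=> hxy; rewrite /Q.
have -> : 2 * x - 2 * y = 2 * (x - y) by lia.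
rewrite np2_dbl; last lia.
rewrite !dvdn_pmul2l //.
split; case=> h1 h2; split => //; lia.
Qed.

Lemma Q_oddodd x y : y < x -> odd x -> odd y -> ~ Q x y.
Proof.
move=> hxy ox oy [_ [h|h]].
- have : 2 %| x by apply: dvdn_trans h; apply: np2_even.
  by rewrite dvdn2 ox.
- have : 2 %| y by apply: dvdn_trans h; apply: np2_even.
  by rewrite dvdn2 oy.
Qed.

Lemma L3' a : 1 <= a -> (Q (2 * a) 1 <-> a = 1).
Proof.
move=> ha; rewrite /Q; split.
  case=> h _; have := np2_spec (_ : 1 <= 2 * a - 1); lia.
move=> ->; rewrite np2_1; split => //; by left.
Qed.

Lemma L3 a b : 1 <= b -> b + 1 <= a ->
  (Q (2 * a) (2 * b + 1) <-> Q a b /\ (a = b + 1 \/ Q a (b + 1))).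
Proof.
move=> hb hab.
case: (ltngtP a (b + 1)) => [h|h|->]; first lia; last first.
  rewrite /Q; have -> : 2 * (b + 1) - (2 * b + 1) = 1 by lia.
  rewrite np2_1; split=> _; last first.
    split; first lia; left; exact: dvdn_mulr.
  split; [exact: Q_succ | by left].
have [e Ea] : exists e, a = b + 1 + e by exists (a - b - 1); lia.
have he : 1 <= e by lia.
subst a; rewrite /Q.
have -> : 2 * (b + 1 + e) - (2 * b + 1) = 2 * e + 1 by lia.
have -> : b + 1 + e - b = e + 1 by lia.
have -> : b + 1 + e - (b + 1) = e by lia.
rewrite np2_odd // dvdn_pmul2l //.
have M2 := np2_ge2 he.
have nd : ~ (2 * np2 e %| 2 * b + 1).
  by apply: no_even_odd; rewrite oddD oddM.
case: (np2_succ he) => [->|[-> E]].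
- split.
  + have [x Ex] : exists x, np2 e = 2 * x by case/dvdnP: (np2_even e) => x ->; exists x; lia.
    case=> h1 [h2|h2]; last by exfalso; exact: nd h2.
    split; [split; [lia | by left] | right; split; [lia | by left]].
  + case=> [[h1 h2]] [h3|[h4 h5]]; first lia.
    split; first lia; left.
    case: h2 => // h2; case: h5 => // h5; exfalso; exact: not_both M2 h2 h5.
- rewrite E.
  have Ea : b + 1 + e = b + (e + 1) by lia.
  set c := e + 1 in Ea *.
  have hc : 0 < c by lia.
  rewrite Ea dvdn_addl; last exact: dvdnn.
  split.
  + case=> h1 [h2|h2]; last by exfalso; apply: nd; rewrite E.
    case/dvdnP: h2 => q Hq.
    have hq : 1 <= q by nia.
    split; last by right; split; [lia | left; rewrite Hq; apply: dvdn_mull; exact: dvdnn].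
    split; first nia.
    rewrite Hq; have -> : q * c + c = (q + 1) * c by lia.
    case: (consec q hc); auto.
  + case=> [[h1 h2]] _; split; first lia.
    case: h2 => h2.
    * left; rewrite -(dvdn_addl _ (dvdnn c)); apply: dvdn_trans h2; exact: dvdn_mull.
    * left; apply: dvdn_trans h2; exact: dvdn_mull.
Qed.

Lemma L4 a b : 1 <= b -> b <= a ->
  (Q (2 * a + 1) (2 * b) <-> (a = b \/ Q a b) /\ Q (a + 1) b).
Proof.
move=> hb hab.
case: (ltngtP a b) => [hlt|hlt|->]; first lia; last first.
  rewrite /Q; have -> : 2 * b + 1 - 2 * b = 1 by lia.
  rewrite np2_1; split => _.
    split; [by left | exact: Q_succ].
  split; [lia | right; exact: dvdn_mulr].
have [c Ea] : exists c, a = b + c by exists (a - b); lia.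
have hc : 1 <= c by lia.
subst a; rewrite /Q.
have -> : 2 * (b + c) + 1 - 2 * b = 2 * c + 1 by lia.
have -> : b + c - b = c by lia.
have -> : b + c + 1 - b = c + 1 by lia.
rewrite np2_odd // dvdn_pmul2l //.
have M2 := np2_ge2 hc.
have nd : ~ (2 * np2 c %| 2 * (b + c) + 1).
  by apply: no_even_odd; rewrite oddD oddM.
case: (np2_succ hc) => [->|[-> E]].
- split.
  + case=> h1 [h2|h2]; first by exfalso; exact: nd h2.
    split; [right; split; [lia | by right] | split; [lia | by right]].
  + move=> [[h|[h1 h2]] [h3 h4]]; first lia.
    split; first lia; right.
    case: h4 => // h4; case: h2 => // h2; exfalso; exact: not_both M2 h2 h4.
- rewrite E in nd *.
  have Eb : b + c + 1 = b + (c + 1) by lia.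
  rewrite Eb.
  set m := c + 1 in Eb nd *.
  have hm : 0 < m by lia.
  split.
  + case=> h1 [h2|h2]; first by exfalso; exact: nd h2.
    case/dvdnP: h2 => q Hq.
    have hq : 1 <= q by nia.
    split; first by right; split; [nia | right; rewrite Hq; apply: dvdn_mull; exact: dvdnn].
    split; first nia.
    rewrite Hq; have -> : q * m + m = (q + 1) * m by lia.
    case: (consec q hm); auto.
  + move=> [_ [h3 h4]]; split; first lia; right.
    case: h4 => h4.
    * rewrite -(dvdn_addr _ (dvdnn m)) addnC; apply: dvdn_trans h4; exact: dvdn_mull.
    * apply: dvdn_trans h4; exact: dvdn_mull.
Qed.


Lemma evod n : (exists m, n = 2 * m) \/ (exists m, n = 2 * m + 1).
Proof.
have := odd_double_half n; case: (odd n) => /= H; [right|left]; exists n./2; lia.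
Qed.

Lemma oddE2 m : odd (2 * m + 1).
Proof. by rewrite oddD oddM. Qed.

Lemma key s : forall a b, a + b <= s -> 1 <= b -> b <= a ->
  f (a + b) <= f a + f b + (a - b) /\
  (f (a + b) = f a + f b + (a - b) <-> (a = b \/ Q a b)).
Proof.
elim: s => [|s IH] a b hs hb hba; first lia.
case: (ltngtP a b) => [hlt|hlt|<-]; first lia; last first.
  have -> : a + a = 2 * a by lia.
  rewrite f_even; last lia. split; first lia.
  split=> _; [by left | lia].
have nQ : (a = b \/ Q a b) <-> Q a b by split; [case=> //; lia | by right].
suff : f (a + b) <= f a + f b + (a - b) /\ (f (a + b) = f a + f b + (a - b) <-> Q a b).
  case=> h1 h2; split => //; split => [H|H]; [right; exact: proj1 h2 H | exact: proj2 h2 (proj1 nQ H)].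
case: (evod a) => [[a' Ea]|[a' Ea]]; case: (evod b) => [[b' Eb]|[b' Eb]]; subst a b.
-
  have [i1 e1] := IH a' b' ltac:(lia) ltac:(lia) ltac:(lia).
  have -> : 2 * a' + 2 * b' = 2 * (a' + b') by lia.
  rewrite !f_even; try lia.
  rewrite Q_dbl; last lia.
  split; first lia.
  split.
  + move=> H; have E1 : f (a' + b') = f a' + f b' + (a' - b') by lia.
    by case: (proj1 e1 E1) => //; lia.
  + move=> H; have := proj2 e1 (or_intror H); lia.
-
  case: (posnP b') => hb'.
  + subst b'.
    have [i1 e1] := IH a' 1 ltac:(lia) ltac:(lia) ltac:(lia).
    rewrite /= in i1 e1 *.
    have -> : 2 * a' + 1 = 2 * a' + 1 by [].
    rewrite f_odd; last lia.
    rewrite f_even; last lia.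
    rewrite f1 in i1 e1 *.
    rewrite L3'; last lia.
    split; first lia.
    split; first lia.
    by move=> ->.
  + have [i1 e1] := IH a' b' ltac:(lia) ltac:(lia) ltac:(lia).
    have [i2 e2] := IH a' (b' + 1) ltac:(lia) ltac:(lia) ltac:(lia).
    rewrite addnA in i2 e2.
    have -> : 2 * a' + (2 * b' + 1) = 2 * (a' + b') + 1 by lia.
    rewrite !f_odd; try lia.
    rewrite f_even; last lia.
    rewrite L3; try lia.
    split; first lia.
    split.
    * move=> H.
      have E1 : f (a' + b') = f a' + f b' + (a' - b') by lia.
      have E2 : f (a' + b' + 1) = f a' + f (b' + 1) + (a' - (b' + 1)) by lia.
      split; [by case: (proj1 e1 E1) => //; lia | exact: proj1 e2 E2].
    * case=> H1 H2.
      have := proj2 e1 (or_intror H1); have := proj2 e2 H2; lia.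
-
  have hb' : 1 <= b' by lia.
  have [i1 e1] := IH a' b' ltac:(lia) ltac:(lia) ltac:(lia).
  have [i2 e2] := IH (a' + 1) b' ltac:(lia) ltac:(lia) ltac:(lia).
  have Eq : a' + 1 + b' = a' + b' + 1 by lia.
  rewrite Eq in i2 e2.
  have -> : 2 * a' + 1 + 2 * b' = 2 * (a' + b') + 1 by lia.
  rewrite !f_odd; try lia.
  rewrite f_even; last lia.
  rewrite L4; try lia.
  split; first lia.
  split.
  * move=> H.
    have E1 : f (a' + b') = f a' + f b' + (a' - b') by lia.
    have E2 : f (a' + b' + 1) = f (a' + 1) + f b' + (a' + 1 - b') by lia.
    split; [exact: proj1 e1 E1 | by case: (proj1 e2 E2) => //; lia].
  * case=> H1 H2.
    have := proj2 e1 H1; have := proj2 e2 (or_intror H2); lia.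
-
  have nq : ~ Q (2 * a' + 1) (2 * b' + 1) by apply: Q_oddodd; rewrite ?oddE2 //; lia.
  have -> : 2 * a' + 1 + (2 * b' + 1) = 2 * (a' + b' + 1) by lia.
  rewrite f_even; last lia.
  rewrite (f_odd (m := a')); last lia.
  case: (posnP b') => hb'.
  + subst b'.
    have [i1 e1] := IH a' 1 ltac:(lia) ltac:(lia) ltac:(lia).
    rewrite /= f1 in i1 *.
    rewrite addn0; split; first lia.
    split; [lia | by move/nq].
  + have [i1 e1] := IH (a' + 1) b' ltac:(lia) ltac:(lia) ltac:(lia).
    have [i2 e2] := IH a' (b' + 1) ltac:(lia) ltac:(lia) ltac:(lia).
    have Eq : a' + 1 + b' = a' + b' + 1 by lia.
    rewrite Eq in i1; rewrite addnA in i2.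
    rewrite f_odd; last lia.
    split; first lia.
    split; [lia | by move/nq].
Qed.


Lemma decomp d : 1 <= d -> exists k D, odd D /\ d = 2 ^ k * D.
Proof.
elim/ltn_ind: d => d IH hd.
case: (boolP (odd d)) => od.
  by exists 0, d; rewrite expn0 mul1n.
have := odd_double_half d; rewrite (negbTE od) /= => E.
have [k [D [oD ED]]] := IH d./2 ltac:(lia) ltac:(lia).
by exists k.+1, D; split => //; rewrite expnS; lia.
Qed.

Lemma np2_scaled k m D : D < 4 * 2 ^ m <= 2 * D ->
  np2 (2 ^ k * D) = 2 ^ k * (4 * 2 ^ m).
Proof.
move=> /andP [h1 h2].
have hX : 0 < 2 ^ k by rewrite expn_gt0.
have -> : 2 ^ k * (4 * 2 ^ m) = 2 ^ (k + m.+2) by rewrite expnD !expnS; lia.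
apply: np2_uniq; rewrite expnD !expnS.
have e1 : 2 ^ k * D < 2 ^ k * (4 * 2 ^ m) by rewrite ltn_pmul2l.
have e2 : 2 ^ k * (4 * 2 ^ m) <= 2 ^ k * (2 * D) by rewrite leq_pmul2l.
apply/andP; split; lia.
Qed.

Lemma np2_pow k : np2 (2 ^ k) = 2 * 2 ^ k.
Proof. by rewrite -expnS; apply: np2_uniq; rewrite expnS; have := expn_gt0 2 k; lia. Qed.

Definition Expl (n na nb : nat) : Prop :=
     (exists k p, 1 <= p /\
         n = 2 ^ k * (2 * p + 1) /\ na = 2 ^ k * (p + 1) /\ nb = 2 ^ k * p)
      \/
      (exists k l p t, 2 <= l /\ 1 <= p /\ t < 2 ^ (l - 2) /\
         n = 2 ^ k * (2 ^ l * (2 * p + 1) + 2 * t + 1) /\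
         na = 2 ^ (k + l) * (p + 1) /\
         nb = 2 ^ k * (2 ^ l * p + 2 * t + 1))
      \/
      (exists k l p t, 2 <= l /\ 1 <= p /\ t < 2 ^ (l - 2) /\
         n = 2 ^ k * (2 ^ l * (2 * p + 1) - (2 * t + 1)) /\
         na = 2 ^ k * (2 ^ l * (p + 1) - (2 * t + 1)) /\
         nb = 2 ^ (k + l) * p).

Lemma expl_to na nb : 1 <= nb -> nb < na -> Q na nb -> Expl (na + nb) na nb.
Proof.
move=> hb hab [hN hdiv].
have hd : 1 <= na - nb by lia.
have [k [D [oD Ed]]] := decomp hd.
have hX : 0 < 2 ^ k by rewrite expn_gt0.
have ENa : na = nb + 2 ^ k * D by lia.
rewrite Ed in hN hdiv.
case: (ltngtP D 1) => hD.
- by move: oD; have -> : D = 0 by lia.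
-
  have [D' ED'] : exists D', D = 2 * D' + 1.
    by exists D./2; have := odd_double_half D; rewrite oD /=; lia.
  have hdD : 1 <= 2 ^ k * D by nia.
  have [l El] : exists l, np2 (2 ^ k * D) = 2 ^ l by exists (trunc_log 2 (2 ^ k * D)).+1.
  have := np2_spec hdD; rewrite El => /andP [s1 s2].
  have hl : k.+2 <= l.
    rewrite leqNgt; apply/negP => hl.
    have : 2 ^ l <= 2 ^ k.+1 by rewrite leq_exp2l //; lia.
    rewrite expnS; nia.
  have [m Em] : exists m, l = k + m.+2 by exists (l - k.+2); lia.
  have EN : np2 (2 ^ k * D) = 2 ^ k * (4 * 2 ^ m).
    apply: np2_scaled.
    have Epow : 2 ^ l = 2 ^ k * (4 * 2 ^ m) by rewrite Em expnD !expnS; lia.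
    rewrite Epow in s1 s2.
    have t1 : D < 4 * 2 ^ m by rewrite -(ltn_pmul2l hX).
    have t2 : 4 * 2 ^ m <= 2 * D by rewrite -(leq_pmul2l hX); lia.
    by rewrite t1 t2.
  rewrite EN in hN hdiv.
  have t1 : D < 4 * 2 ^ m.
    by rewrite -(ltn_pmul2l hX) -EN; have := np2_spec hdD; lia.
  have t2 : 4 * 2 ^ m <= 2 * D.
    by rewrite -(leq_pmul2l hX); have := np2_spec hdD; rewrite EN; lia.
  clear El s1 s2 hl.
  have [X EX] : exists X, X = 2 ^ k by eexists.
  have [Z EZ] : exists Z, Z = 2 ^ m by eexists.
  rewrite -EX in hX ENa hN hdiv EN hdD Ed.
  rewrite -EZ in hN hdiv EN t1 t2.
  have [t Et] : exists t, D + 2 * t + 1 = 4 * Z by exists (2 * Z - D' - 1); lia.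
  have htZ : t < Z by lia.
  have Xt : X * (D + 2 * t + 1) = X * (4 * Z) by rewrite Et.
  have pw1 : 2 ^ (m.+2 - 2) = Z by rewrite EZ; congr (2 ^ _); lia.
  have pw2 : 2 ^ m.+2 = 4 * Z by rewrite EZ !expnS; lia.
  have pw3 : 2 ^ (k + m.+2) = X * (4 * Z) by rewrite expnD pw2 EX.
  case: hdiv => /dvdnP [q Eq].
  +
    have hq : 2 <= q.
      case: q Eq => [|[|q]] Eq; try lia.
      rewrite mul1n in Eq.
      have : X * (2 * D) <= X * (4 * Z) by lia.
      rewrite leq_pmul2l // => h; move: oD; have -> : D = 2 * Z by lia.
      by rewrite oddM.
    have [p Ep] : exists p, q = p + 1 by exists (q - 1); lia.
    subst q.
    right; left; exists k, m.+2, p, t.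
    rewrite pw1 pw2 pw3 -EX; do 3 (split; first lia).
    split; last split; lia.
  +
    have hq : 1 <= q by case: q Eq => [|q]; lia.
    right; right; exists k, m.+2, q, t.
    rewrite pw1 pw2 pw3 -EX; do 3 (split; first lia).
    have E1 : 4 * Z * (2 * q + 1) - (2 * t + 1) = 4 * Z * (2 * q) + D by lia.
    have E2 : 4 * Z * (q + 1) - (2 * t + 1) = 4 * Z * q + D by lia.
    rewrite E1 E2; split; last split; lia.
-
  subst D; rewrite muln1 np2_pow in hN hdiv.
  rewrite muln1 in ENa.
  have hXb : 2 ^ k %| nb.
    case: hdiv => h.
    + have : 2 ^ k %| na by apply: dvdn_trans h; apply: dvdn_mull.
      by rewrite ENa dvdn_addl.
    + by apply: dvdn_trans h; apply: dvdn_mull.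
  case/dvdnP: hXb => p Ep.
  left; exists k, p; split; first by case: p Ep => [|p]; lia.
  split; last split; lia.
Qed.

Lemma expl_from na nb : 1 <= nb -> nb < na -> Expl (na + nb) na nb -> Q na nb.
Proof.
move=> hb hab.
case=> [[k [p [hp [_ [Ea Eb]]]]]|[[k [l [p [t [hl [hp [ht [_ [Ea Eb]]]]]]]]]|[k [l [p [t [hl [hp [ht [_ [Ea Eb]]]]]]]]]]].
- have hX : 0 < 2 ^ k by rewrite expn_gt0.
  rewrite /Q; have -> : na - nb = 2 ^ k by lia.
  rewrite np2_pow; split.
    have : 2 ^ k * 1 <= 2 ^ k * p by rewrite leq_pmul2l.
    lia.
  rewrite Ea Eb [2 ^ k * (p + 1)]mulnC [2 ^ k * p]mulnC.
  by case: (consec p hX); auto.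
- have [m Em] : exists m, l = m.+2 by exists (l - 2); lia.
  subst l.
  have hX : 0 < 2 ^ k by rewrite expn_gt0.
  have hZ : 0 < 2 ^ m by rewrite expn_gt0.
  have pw1 : 2 ^ (m.+2 - 2) = 2 ^ m by congr (2 ^ _); lia.
  have pw2 : 2 ^ m.+2 = 4 * 2 ^ m by rewrite !expnS; lia.
  have pw3 : 2 ^ (k + m.+2) = 2 ^ k * (4 * 2 ^ m) by rewrite expnD pw2.
  rewrite pw1 in ht; rewrite pw3 in Ea; rewrite pw2 in Eb.
  have [D ED] : exists D, D + 2 * t + 1 = 4 * 2 ^ m by exists (4 * 2 ^ m - 2 * t - 1); lia.
  have XD : 2 ^ k * (D + 2 * t + 1) = 2 ^ k * (4 * 2 ^ m) by rewrite ED.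
  rewrite /Q; have -> : na - nb = 2 ^ k * D by lia.
  rewrite (@np2_scaled k m D); last by apply/andP; split; lia.
  have h4 : 4 * 2 ^ m * 1 <= 4 * 2 ^ m * p by rewrite leq_pmul2l //; lia.
  have h5 : 2 ^ k * (4 * 2 ^ m * 1) <= 2 ^ k * (4 * 2 ^ m * p) by rewrite leq_pmul2l.
  split; first lia.
  by left; rewrite Ea dvdn_mulr.
- have [m Em] : exists m, l = m.+2 by exists (l - 2); lia.
  subst l.
  have hX : 0 < 2 ^ k by rewrite expn_gt0.
  have hZ : 0 < 2 ^ m by rewrite expn_gt0.
  have pw1 : 2 ^ (m.+2 - 2) = 2 ^ m by congr (2 ^ _); lia.
  have pw2 : 2 ^ m.+2 = 4 * 2 ^ m by rewrite !expnS; lia.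
  have pw3 : 2 ^ (k + m.+2) = 2 ^ k * (4 * 2 ^ m) by rewrite expnD pw2.
  rewrite pw1 in ht; rewrite pw3 in Eb; rewrite pw2 in Ea.
  have [D ED] : exists D, D + 2 * t + 1 = 4 * 2 ^ m by exists (4 * 2 ^ m - 2 * t - 1); lia.
  have E2 : 4 * 2 ^ m * (p + 1) - (2 * t + 1) = 4 * 2 ^ m * p + D by lia.
  rewrite E2 in Ea.
  rewrite /Q; have -> : na - nb = 2 ^ k * D by lia.
  rewrite (@np2_scaled k m D); last by apply/andP; split; lia.
  have h4 : 4 * 2 ^ m * 1 <= 4 * 2 ^ m * p by rewrite leq_pmul2l //; lia.
  have h5 : 2 ^ k * (4 * 2 ^ m * 1) <= 2 ^ k * (4 * 2 ^ m * p) by rewrite leq_pmul2l.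
  split; first lia.
  by right; rewrite Eb dvdn_mulr.
Qed.


Lemma colless_lb T : f (leaves T) <= colless T.
Proof.
elim: T => [|l IHl r IHr] /=; first by rewrite f1.
have hl := leaves_ge1 l; have hr := leaves_ge1 r.
rewrite /absdiff; case: (leqP (leaves r) (leaves l)) => h.
  have [i _] := key (leqnn (leaves l + leaves r)) hr h; lia.
have [i _] := key (leqnn (leaves r + leaves l)) hl (ltnW h).
rewrite [leaves r + leaves l]addnC in i; lia.
Qed.

Lemma fold_le x s y : y \in x :: s -> foldr minn x s <= y.
Proof.
elim: s y => [|z s IH] y /=; first by rewrite mem_seq1 => /eqP ->.
rewrite !in_cons => /orP [/eqP ->|/orP [/eqP ->|hy]].
- by rewrite geq_min IH ?orbT // in_cons eqxx.
- by rewrite geq_min leqnn.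
- by rewrite geq_min IH ?orbT // in_cons hy orbT.
Qed.

Lemma fold_in x s : foldr minn x s \in x :: s.
Proof.
elim: s => [|z s IH] /=; first by rewrite mem_seq1.
rewrite /minn; case: ifP => _; first by rewrite !in_cons eqxx orbT.
move: IH; rewrite !in_cons => /orP [->|->] //; by rewrite !orbT.
Qed.

Lemma mc_f n : 1 <= n -> min_colless n = f n.
Proof.
move=> hn; rewrite /min_colless /trees_n.
have hin : f n \in [seq colless T | T <- trees_f n n].
  apply/mapP; exists (bal n) => //.
  have := @trees_complete n (bal n); rewrite leaves_bal //; apply; exact: leqnn.
have hall : all (fun x => f n <= x) [seq colless T | T <- trees_f n n].
  rewrite all_map; apply/allP => T hT /=.
  have := allP (trees_leaves n n) T hT => /eqP <-; exact: colless_lb.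
move: hin hall; case: [seq colless T | T <- trees_f n n] => [|x s] // hin hall.
apply/eqP; rewrite eqn_leq fold_le //=.
exact: (allP hall _ (fold_in x s)).
Qed.

Unset Implicit Arguments.

Theorem proposition2 (n na nb : nat) :
  2 <= n -> 1 <= na -> 1 <= nb -> nb <= na -> na + nb = n ->
  (na = nb -> QB n na nb) /\
  (nb < na ->
    (QB n na nb <->
     ((exists k p, 1 <= p /\
         n = 2 ^ k * (2 * p + 1) /\ na = 2 ^ k * (p + 1) /\ nb = 2 ^ k * p)
      \/
      (exists k l p t, 2 <= l /\ 1 <= p /\ t < 2 ^ (l - 2) /\
         n = 2 ^ k * (2 ^ l * (2 * p + 1) + 2 * t + 1) /\
         na = 2 ^ (k + l) * (p + 1) /\
         nb = 2 ^ k * (2 ^ l * p + 2 * t + 1))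
      \/
      (exists k l p t, 2 <= l /\ 1 <= p /\ t < 2 ^ (l - 2) /\
         n = 2 ^ k * (2 ^ l * (2 * p + 1) - (2 * t + 1)) /\
         na = 2 ^ k * (2 ^ l * (p + 1) - (2 * t + 1)) /\
         nb = 2 ^ (k + l) * p)))).
Proof.
move=> hn ha hb hba Hn.
have [i e] := key (leqnn (na + nb)) hb hba.
rewrite /QB !mc_f -?Hn //; try lia.
split.
  move=> E; split => //; rewrite -E in e *; symmetry; apply/e; by left.
move=> hlt; split.
- case=> _ _ _ /esym/e [E|HQ]; first lia.
  exact: expl_to.
- move=> HE; split => //; symmetry; apply/e; right; exact: expl_from.
Qed.
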